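(* Let $G$ be a locally compact abelian group with dual group $\Gamma$, and let $(\mu,\nu)$ be a spectral pair of positive Borel measures on $(G,\Gamma)$. If there exists a sequence of $\mu$-measurable sets $A_n\subset G$ with $\mu(A_n)\ne0$ for all $n$ and $\mu(A_n)\to0$, then $\nu(\Gamma)=+\infty$.
   Context: $G$ is written additively; $\Gamma=\hat G$ is the group of continuous homomorphisms $G\to\mathbb{T}$ (unit circle in $\mathbb{C}$). Write $\langle x,\xi\rangle$ for the pairing, $e_\xi(x)=\langle x,\xi\rangle$. $(\mu,\nu)$ is a spectral pair if, with $(Ff)(\xi)=\int_G f(x)\overline{e_\xi(x)}\,d\mu(x)$ for $f\in\mathcal{L}^1\cap\mathcal{L}^2(\mu)$, the set $\{Ff\}$ is dense in $\mathcal{L}^2(\nu)$ and $\int_\Gamma|Ff|^2d\nu=\int_G|f|^2d\mu$ for all such $f$. *)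

(* Defs.v *)
From HB Require Import structures.
From mathcomp Require Import all_boot all_order all_algebra.
From mathcomp Require Import all_classical all_reals all_analysis.
From mathcomp Require Import complex.
Set Implicit Arguments. Unset Strict Implicit. Unset Printing Implicit Defensive.
Import Order.TTheory GRing.Theory Num.Theory.
Import numFieldTopology.Exports numFieldNormedType.Exports.
Local Open Scope classical_set_scope.
Local Open Scope ring_scope.
Local Open Scope complex_scope.

HB.instance Definition _ (R : rcfType) :=
  PseudoPointedMetric.copy R[i] (R[i])^o.

Definition borel (T : ptopologicalType) := g_sigma_algebraType (@open T).

Section GBorel.
Variable G : topologicalZmodType.
Definition pt_group : Type := G.
HB.instance Definition _ := Choice.on pt_group.
HB.instance Definition _ := isPointed.Build pt_group (0 : G).
Definition gborel := g_sigma_algebraType (@open G : set (set pt_group)).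
End GBorel.

Section Dual.
Variables (R : realType) (G : topologicalZmodType).

Definition is_character (chi : {compact-open, G -> R[i]}) : Prop :=
  [/\ continuous (chi : G -> R[i]),
      (forall x, `|chi x| = 1) &
      (forall x y, chi (x + y) = chi x * chi y)].

Lemma is_character1 : is_character (fun _ => 1).
Proof.
split; first by move=> x; exact: cvg_cst.
- by move=> x; rewrite normr1.
- by move=> x y; rewrite mulr1.
Qed.

Definition dual : Type := set_type is_character.
HB.instance Definition _ := Topological.on dual.

HB.instance Definition _ :=
  isPointed.Build dual (exist _ (fun _ => 1) (mem_set is_character1)).

Definition pairing (xi : dual) (x : G) : R[i] := (sval xi) x.
End Dual.

Section L2.
Variables (R : realType) (d : measure_display) (T : measurableType d).
Variable (m : {measure set T -> \bar R}).
Local Open Scope ereal_scope.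

Definition cabs2 (z : R[i]) : R := (complex.Re z ^+ 2 + complex.Im z ^+ 2)%R.
Definition cabs (z : R[i]) : R := Num.sqrt (cabs2 z).

Definition cmeasurable (f : T -> R[i]) : Prop :=
  measurable_fun setT (fun x => complex.Re (f x)) /\ measurable_fun setT (fun x => complex.Im (f x)).

Definition L1 (f : T -> R[i]) : Prop :=
  cmeasurable f /\ \int[m]_x (cabs (f x))%:E < +oo.

Definition L2 (f : T -> R[i]) : Prop :=
  cmeasurable f /\ \int[m]_x (cabs2 (f x))%:E < +oo.

Definition cintegral (f : T -> R[i]) : R[i] :=
  (fine (\int[m]_x (complex.Re (f x))%:E) +i* fine (\int[m]_x (complex.Im (f x))%:E))%C.
End L2.

Section Spectral.
Variables (R : realType) (G : topologicalZmodType).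
Variables (mu : {measure set (gborel G) -> \bar R})
          (nu : {measure set (borel (dual R G)) -> \bar R}).
Local Open Scope ereal_scope.

Definition fourier (f : gborel G -> R[i]) (xi : borel (dual R G)) : R[i] :=
  cintegral mu (fun x => (f x * conjc (pairing xi x))%R).

Definition spectral_pair : Prop :=
  (forall f, L1 mu f -> L2 mu f ->
     L2 nu (fourier f) /\
     \int[nu]_xi (cabs2 (fourier f xi))%:E = \int[mu]_x (cabs2 (f x))%:E) /\
  (forall g, L2 nu g -> forall e : R, (0 < e)%R ->
     exists f, [/\ L1 mu f, L2 mu f &
       \int[nu]_xi (cabs2 (fourier f xi - g xi)%R)%:E < e%:E]).
End Spectral.

(* Main.v *)
Require Import Defs.
From HB Require Import structures.
From mathcomp Require Import all_boot all_order all_algebra.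
From mathcomp Require Import all_classical all_reals all_analysis.
From mathcomp Require Import complex.
From mathcomp Require Import ring lra.
Import Order.TTheory GRing.Theory Num.Theory.
Import numFieldNormedType.Exports.
Local Open Scope classical_set_scope.
Local Open Scope ring_scope.

Lemma indic_ge0 (T : Type) (R : realType) (A : set T) (x : T) : 0 <= (\1_A x : R).
Proof. by rewrite indicE; case: (x \in A). Qed.

Section Helpers.
Context d (T : measurableType d) (R : realType).
Variable mu : {measure set T -> \bar R}.

Lemma ge0_le_int_nm {f g : T -> \bar R} :
  (forall x, (0 <= f x)%E) -> (forall x, (f x <= g x)%E) ->
  (\int[mu]_x f x <= \int[mu]_x g x)%E.
Proof.
move=> f0 fg.
have g0 : forall x, (0 <= g x)%E by move=> x; exact: le_trans (f0 x) (fg x).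
rewrite (ge0_integralTE mu f0) (ge0_integralTE mu g0) /=.
apply: ereal_sup_le => _ [h /= hf <-]; exists h => //= x.
exact: le_trans (hf x) (fg x).
Qed.

Lemma int_bound (g : T -> R) (A : set T) (a : R) :
  measurable A -> mu A = a%:E ->
  (forall x, `|g x| <= \1_A x) ->
  `|fine (\int[mu]_x (g x)%:E)| <= a.
Proof.
move=> mA muA hg.
have hb : forall (h : T -> \bar R), (forall x, 0 <= h x)%E ->
    (forall x, h x <= (\1_A x)%:E)%E ->
    exists p : R, (\int[mu]_x h x)%E = p%:E /\ 0 <= p <= a.
  move=> h h0 hA.
  have le1 := ge0_le_int_nm h0 hA.
  rewrite integral_indic // setIT muA in le1.
  have ge0 : (0 <= \int[mu]_x h x)%E.
    by apply: integral_ge0 => x _; exact: h0.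
  move: le1 ge0; case: (\int[mu]_x h x)%E => [p| |] //= le1 ge0.
  by exists p; split => //; rewrite -!lee_fin ge0 le1.
rewrite integralE.
have [p [-> /andP[p0 pa]]] : exists p : R, (\int[mu]_x ((EFin \o g)^\+ x))%E = p%:E /\ 0 <= p <= a.
  apply: hb => [x|x]; first exact: funepos_ge0. rewrite funeposE /= -EFin_max lee_fin ge_max indic_ge0 andbT.
  by have := hg x; rewrite ler_norml => /andP[].
have [q [-> /andP[q0 qa]]] : exists p : R, (\int[mu]_x ((EFin \o g)^\- x))%E = p%:E /\ 0 <= p <= a.
  apply: hb => [x|x]; first exact: funeneg_ge0. rewrite funenegE /= -EFin_max lee_fin ge_max indic_ge0 andbT.
  by have := hg x; rewrite ler_norml lerNl => /andP[].
rewrite /= ler_norml; apply/andP; split; lra.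
Qed.
End Helpers.

Lemma re_bound (R : realType) (r : R) (c : R[i]) : 0 <= r -> cabs2 c = 1 ->
  `|complex.Re ((r%:C)%C * conjc c)| <= r /\ `|complex.Im ((r%:C)%C * conjc c)| <= r.
Proof.
case: c => a b r0; rewrite /cabs2 /= => h.
have a1 : -1 <= a <= 1 by apply/andP; split; nra.
have b1 : -1 <= b <= 1 by apply/andP; split; nra.
move: a1 b1 => /andP[? ?] /andP[? ?].
split; rewrite ler_norml; apply/andP; split; nra.
Qed.

Theorem corollaryA12 (R : realType) (G : topologicalZmodType)
  (G_lc : locally_compact [set: G]) (G_T2 : hausdorff_space G)
  (mu : {measure set (gborel G) -> \bar R})
  (nu : {measure set (borel (dual R G)) -> \bar R})
  (spec : spectral_pair mu nu)
  (A : nat -> set (gborel G))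
  (A_meas : forall n, measurable (A n))
  (A_ne0 : forall n, mu (A n) != 0%E)
  (A_lim : (fun n => mu (A n)) @ \oo --> 0%E) :
  nu [set: borel (dual R G)] = +oo%E.
Proof.
have nu0 : (0 <= nu [set: borel (dual R G)])%E by exact: measure_ge0.
case Hnu : (nu [set: borel (dual R G)]) => [M| |] //; last by rewrite Hnu in nu0.
exfalso; have M0 : 0 <= M by rewrite -lee_fin -Hnu.
pose e := (2 * (M + 1))^-1.
have e0 : 0 < e by rewrite invr_gt0; lra.
have eM : e * (2 * (M + 1)) = 1.
  by rewrite /e mulVf // gt_eqF //; lra.
have A_lim2 : (fun n => mu (A n)) @ \oo --> (0:R)%:E by exact: A_lim.
move/fine_cvgP: A_lim2 => [Afin Acv].
have Alt := cvgr_lt _ Acv _ e0.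
near \oo => n.
have fn : mu (A n) \is a fin_num by near: n.
have ltn : fine (mu (A n)) < e by near: n; exact: Alt.
set a := fine (mu (A n)) in ltn.
have muA : mu (A n) = a%:E by rewrite fineK.
have a0 : 0 < a.
  rewrite lt_def; apply/andP; split.
    by apply: contra (A_ne0 n); rewrite muA => /eqP ->.
  by rewrite -lee_fin -muA measure_ge0.
pose f := fun x : gborel G => ((\1_(A n) x : R)%:C)%C.
have i01 : forall x, (\1_(A n) x : R) ^+ 2 = \1_(A n) x.
  by move=> x; rewrite indicE; case: (x \in A n); rewrite ?expr1n ?expr0n.
have cmf : cmeasurable f.
  split => /=; first exact: measurable_realfun.measurable_indic.
  exact: measurable_cst.
have cabs2f : forall x, cabs2 (f x) = \1_(A n) x.
  by move=> x; rewrite /cabs2 /= expr0n /= addr0 i01.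
have cabsf : forall x, cabs (f x) = \1_(A n) x.
  by move=> x; rewrite /cabs cabs2f -{1}i01 sqrtr_sqr ger0_norm // indic_ge0.
have intf : (\int[mu]_x (cabs2 (f x))%:E)%E = a%:E.
  under eq_integral do rewrite cabs2f.
  by rewrite integral_indic // setIT muA.
have L1f : L1 mu f.
  split => //; under eq_integral do rewrite cabsf.
  by rewrite integral_indic // setIT muA ltry.
have L2f : L2 mu f by split => //; rewrite intf ltry.
have [_ Heq] := spec.1 f L1f L2f.
have Hb : forall xi, cabs2 (fourier mu f xi) <= 2 * a ^+ 2.
  move=> xi.
  have hc : forall x, cabs2 (pairing xi x) = 1.
    move=> x; have := svalP xi; rewrite inE => -[_ Hn _].
    have := add_Re2_Im2 (pairing xi x); rewrite /pairing Hn expr1n.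
    by move=> /(congr1 (@complex.Re R)) /=.
  have hRI : forall x, `|complex.Re (f x * conjc (pairing xi x))| <= \1_(A n) x /\
                  `|complex.Im (f x * conjc (pairing xi x))| <= \1_(A n) x.
    by move=> x; apply: re_bound; [exact: indic_ge0 | exact: hc].
  have hp := @int_bound _ _ _ mu _ _ _ (A_meas n) muA (fun x => (hRI x).1).
  have hq := @int_bound _ _ _ mu _ _ _ (A_meas n) muA (fun x => (hRI x).2).
  rewrite /fourier /cintegral /cabs2 /=.
  move: hp hq; set p := fine _; set q := fine _.
  rewrite !ler_norml => /andP[? ?] /andP[? ?]; nra.
have le : (\int[nu]_xi (cabs2 (fourier mu f xi))%:E <= \int[nu]_xi (2 * a^+2)%:E)%E.
  apply: ge0_le_int_nm => xi; rewrite lee_fin; last exact: Hb.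
  by rewrite /cabs2 addr_ge0 // sqr_ge0.
rewrite integral_cst //= Hnu Heq intf -EFinM lee_fin in le.
have : 1 <= 2 * a * M by nra.
nra.
Unshelve. all: end_near.
Qed.
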